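(* Let $M \in \mathbb{Z}^{\ell \times m}$ have full column rank and let $F \in \mathbb{Z}^{n \times m}$. Then the $(\ell+n)\times(m+n)$ integer matrix $$\begin{bmatrix} M & 0 \\ F & I_n \end{bmatrix}$$ has full column rank, and its Hermite basis has the block shape $$\begin{bmatrix} T & X \\ 0 & H \end{bmatrix}$$ with $T \in \mathbb{Z}^{m\times m}$, $X\in\mathbb{Z}^{m\times n}$, $H \in \mathbb{Z}^{n \times n}$, where $\mathcal{L}(T) = \mathcal{L}(M) + \mathcal{L}(F)$ and $\mathcal{L}(H) = \mathcal{R}(M,F)$.
   Context: For an integer matrix $A$, $\mathcal{L}(A)$ denotes the lattice of all $\mathbb{Z}$-linear combinations of the rows of $A$; $\mathcal{L}(A)+\mathcal{L}(B)$ is the lattice generated by the rows of $A$ and $B$ together. For $M \in \mathbb{Z}^{\ell \times m}$ of full column rank and $F \in \mathbb{Z}^{n \times m}$, the integer relations lattice is $\mathcal{R}(M,F) := \{p \in \mathbb{Z}^{1\times n} : pF \in \mathcal{L}(M)\}$ (equivalently, $pF = qM$ for some integer row vector $q$). A full column rank integer matrix with $m$ columns is in (row) Hermite form if its first $m$ rows form an upper triangular matrix with positive diagonal entries $h_1,\dots,h_m$, every entry above the diagonal in column $j$ lies in $[0,h_j)$, and all remaining rows are zero. Every full column rank integer matrix $A$ has a unique Hermite form $WA$ with $W$ unimodular; the Hermite basis of $A$ is the nonsingular square matrix consisting of the nonzero rows of the Hermite form of $A$; it is the unique matrix in Hermite form whose row lattice equals $\mathcal{L}(A)$. *)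

(* Defs.v *)
From HB Require Import structures.
From mathcomp Require Import all_boot all_order all_algebra.
Set Implicit Arguments. Unset Strict Implicit. Unset Printing Implicit Defensive.
Import Order.TTheory GRing.Theory Num.Theory.
Local Open Scope ring_scope.

Definition in_lattice (r c : nat) (A : 'M[int]_(r, c)) (v : 'rV[int]_c) : Prop :=
  exists w : 'rV[int]_r, v = w *m A.

Definition same_lattice (r1 r2 c : nat) (A : 'M[int]_(r1, c)) (B : 'M[int]_(r2, c)) : Prop :=
  forall v, in_lattice A v <-> in_lattice B v.

Definition full_col_rank (r c : nat) (A : 'M[int]_(r, c)) : Prop :=
  \rank (map_mx (fun x : int => x%:~R : rat) A) = c.

Definition in_relations (l m n : nat) (M : 'M[int]_(l, m)) (F : 'M[int]_(n, m))
  (p : 'rV[int]_n) : Prop :=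
  exists q : 'rV[int]_l, p *m F = q *m M.

Definition is_hermite (c : nat) (H : 'M[int]_c) : Prop :=
  forall i j : 'I_c,
    [/\ ((j < i)%N -> H i j = 0),
        (i = j -> 0 < H i j) &
        ((i < j)%N -> 0 <= H i j < H j j)].

Definition hermite_basis_of (r c : nat) (A : 'M[int]_(r, c)) (B : 'M[int]_c) : Prop :=
  is_hermite B /\ same_lattice B A.

(* Main.v *)
Require Import Defs.
From HB Require Import structures.
From mathcomp Require Import all_boot all_order all_algebra.
From Stdlib Require Import Classical.
Import Order.TTheory GRing.Theory Num.Theory.
Local Open Scope ring_scope.

Lemma clear_den r c (C : 'M[rat]_(r,c)) :
  exists d : int, exists D : 'M[int]_(r,c),
    0 < d /\ map_mx (fun x : int => x%:~R : rat) D = d%:~R *: C.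
Proof.
pose d := \prod_(k : 'I_r * 'I_c) denq (C k.1 k.2).
exists d, (\matrix_(i,j) numq (d%:~R * C i j)).
split; first by apply: prodr_gt0 => k _; apply: denq_gt0.
apply/matrixP => i j; rewrite !mxE.
pose x := C i j.
have -> : d = denq x * \prod_(k | k != (i,j)) denq (C k.1 k.2).
  by rewrite /d (bigD1 (i,j)) //.
set e := \prod_(k | _) _.
have hx : x * (denq x)%:~R = (numq x)%:~R.
  rewrite -{1}(divq_num_den x) -mulrA mulVf ?mulr1 //.
  by rewrite intr_eq0 denq_eq0.
rewrite -/x intrM mulrAC (mulrC _ x) hx -intrM numq_int.
by rewrite intrM mulrC.
Qed.

Lemma fcr_inv r c (A : 'M[int]_(r,c)) : full_col_rank A ->
  exists d : int, exists D : 'M[int]_(c,r), 0 < d /\ D *m A = d%:M.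
Proof.
rewrite /full_col_rank => h.
have /row_fullP [C hC] : row_full (map_mx (fun x : int => x%:~R : rat) A).
  by rewrite /row_full h.
have [d [D [d0 hD]]] := clear_den _ _ C.
exists d, D; split => //.
have key : map_mx (fun x : int => x%:~R : rat) (D *m A) = map_mx (fun x : int => x%:~R : rat) (d%:M).
  rewrite map_mxM hD -scalemxAl hC map_scalar_mx /=.
  by rewrite scalemx1.
apply/matrixP => i j.
have := congr1 (fun N : 'M[rat]_c => N i j) key; rewrite !mxE.
by move/intr_inj.
Qed.

Lemma ex_minP (P : nat -> Prop) : (exists n, P n) ->
  exists n, P n /\ forall k, P k -> (n <= k)%N.
Proof.
move=> [n Pn].
suff: forall N n, (n <= N)%N -> P n -> exists n, P n /\ forall k, P k -> (n <= k)%N.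
  by move=> /(_ n n (leqnn n) Pn).
elim=> [|N IH] {}n hn {}Pn.
  by exists n; split => // k _; move: hn; rewrite leqn0 => /eqP ->.
case: (classic (exists k, (k < n)%N /\ P k)) => [[k [hk Pk]]|hno].
  apply: (IH k) => //; rewrite -ltnS; exact: leq_trans hk hn.
exists n; split => // k Pk; rewrite leqNgt; apply/negP => hk.
by apply: hno; exists k.
Qed.

Section Lat.
Variables (r c : nat) (A : 'M[int]_(r,c)).

Lemma lat_mul w : in_lattice A (w *m A). Proof. by exists w. Qed.

Definition lev (t : nat) (v : 'rV[int]_c) := forall j : 'I_c, (j < t)%N -> v 0 j = 0.

Lemma entB (u v : 'rV[int]_c) j : (u - v) 0 j = u 0 j - v 0 j. Proof. by rewrite !mxE. Qed.
Lemma entD (u v : 'rV[int]_c) j : (u + v) 0 j = u 0 j + v 0 j. Proof. by rewrite !mxE. Qed.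
Lemma entZ (q : int) (u : 'rV[int]_c) j : (q *: u) 0 j = q * u 0 j. Proof. by rewrite !mxE. Qed.

Lemma modzE' (m d : int) : (m %% d)%Z = m - (m %/ d)%Z * d. Proof. by []. Qed.

Lemma level_min (d : int) (D : 'M[int]_(c,r)) : 0 < d -> D *m A = d%:M ->
  forall i : 'I_c, exists h : int, [/\ 0 < h,
    (exists w, lev i (w *m A) /\ (w *m A) 0 i = h) &
    (forall v, in_lattice A v -> lev i v -> (h %| v 0%R i)%Z)].
Proof.
move=> d0 hD i.
pose P k := exists w, [/\ lev i (w *m A), (w *m A) 0 i = k%:Z & (0 < k)%N].
have [n [[w [lw hw n0]] hmin]] : exists n, P n /\ forall k, P k -> (n <= k)%N.
  apply: ex_minP; exists `|d|%N; exists (row i D).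
  rewrite -row_mul hD; split.
  - move=> j hj; rewrite !mxE; case: eqP => [e|] //; subst.
    by rewrite ltnn in hj.
  - by rewrite !mxE eqxx mulr1n gtz0_abs.
  - by rewrite absz_gt0 gt_eqF.
exists n%:Z; split => //; first by exists w.
move=> v [x ->] lv.
pose q := ((x *m A) 0%R i %/ n%:Z)%Z.
pose u := (x - q *: w) *m A.
have hu : u 0 i = ((x *m A) 0%R i %% n%:Z)%Z.
  by rewrite /u mulmxBl -scalemxAl entB entZ hw modzE' mulrC.
have lu : lev i u.
  by move=> j hj; rewrite /u mulmxBl -scalemxAl entB entZ lw // lv // mulr0 subr0.
have nz : n%:Z != 0 by rewrite eqz_nat -lt0n.
apply/dvdz_mod0P; rewrite -hu.
have := modz_ge0 ((x *m A) 0%R i) nz; rewrite -hu le_eqVlt => /orP [/eqP <- //|hp].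
have : P `|u 0%R i|%N.
  exists (x - q *: w); split => //; first by rewrite gtz0_abs.
  by rewrite absz_gt0 gt_eqF.
move/hmin => hle.
have := ltz_mod ((x *m A) 0%R i) nz; rewrite -hu.
rewrite -{1}(gtz0_abs hp) => hlt.
have : (`|u 0%R i|%N < `|n%:Z|%N)%N by [].
by rewrite absz_nat ltnNge hle.
Qed.

Lemma reduced_rows (h : 'I_c -> int)
  (Hh : forall i, 0 < h i /\ exists w, lev i (w *m A) /\ (w *m A) 0 i = h i) :
  forall i : 'I_c, exists w, [/\ lev i (w *m A), (w *m A) 0 i = h i &
     forall k : 'I_c, (i < k)%N -> 0 <= (w *m A) 0 k < h k].
Proof.
move=> i.
suff: forall t, exists w, [/\ lev i (w *m A), (w *m A) 0 i = h i &
     forall k : 'I_c, (i < k < t)%N -> 0 <= (w *m A) 0 k < h k].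
  move=> /(_ c) [w [h1 h2 h3]]; exists w; split => // k hk.
  by apply: h3; rewrite hk ltn_ord.
elim=> [|t [w [lw hw rw]]].
  have [_ [w [lw hw]]] := Hh i; exists w; split => // k; by rewrite ltn0 andbF.
case: (ltnP i t) => hit; last first.
  exists w; split => // k /andP [hk1 hk2].
  move: hk2; rewrite ltnS => hk2.
  by have := leq_trans (leq_ltn_trans hit hk1) hk2; rewrite ltnn.
case: (ltnP t c) => htc; last first.
  exists w; split => // k /andP [hk1 hk2]; apply: rw.
  by rewrite hk1 /=; apply: leq_trans (ltn_ord k) htc.
pose T := Ordinal htc.
have [hT0 [u [lu hu]]] := Hh T.
pose q := ((w *m A) 0%R T %/ h T)%Z.
have keep : forall k : 'I_c, (k < t)%N -> ((w - q *: u) *m A) 0 k = (w *m A) 0 k.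
  by move=> k hk; rewrite mulmxBl -scalemxAl entB entZ lu // mulr0 subr0.
exists (w - q *: u); split.
- move=> j hj; rewrite keep ?lw //; exact: ltn_trans hj hit.
- by rewrite keep.
move=> k /andP [hk1]; rewrite ltnS leq_eqVlt => /orP [/eqP ek|hk2]; last first.
  by rewrite keep // rw // hk1.
have -> : k = T by apply: val_inj.
rewrite mulmxBl -scalemxAl entB entZ hu -modzE'.
have nz : h T != 0 by rewrite gt_eqF.
rewrite modz_ge0 //=.
have := ltz_mod ((w *m A) 0%R T) nz.
by rewrite gtr0_norm.
Qed.

Lemma hnf_exists : full_col_rank A -> exists B, hermite_basis_of A B.
Proof.
move=> /fcr_inv [d [D [d0 hD]]].
have /fin_all_exists [h Hh] := @level_min d D d0 hD.
have Hh' : forall i, 0 < h i /\ exists w, lev i (w *m A) /\ (w *m A) 0 i = h i.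
  by move=> i; have [? ? ?] := Hh i.
have /fin_all_exists [wf Hw] := @reduced_rows h Hh'.
pose W := \matrix_i wf i.
pose B := W *m A.
have rB : forall i, row i B = wf i *m A by move=> i; rewrite row_mul rowK.
have eB : forall i j, B i j = (wf i *m A) 0 j.
  by move=> i j; rewrite -rB [RHS]mxE.
exists B; split.
  move=> i j; have [lw hw rw] := Hw i; rewrite !eB; split.
  - by move=> hji; apply: lw.
  - by move=> <-; rewrite hw; have [] := Hh i.
  - by move=> hij; have [_ hwj _] := Hw j; rewrite hwj; apply: rw.
move=> v; split.
  by move=> [x ->]; exists (x *m W); rewrite mulmxA.
suff: forall s v, in_lattice A v -> lev (c - s) v -> in_lattice B v.
  by move=> H hv; apply: (H c v hv); rewrite subnn => j; rewrite ltn0.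
elim=> [|s IH] {}v hv.
  rewrite subn0 => lv; exists 0; rewrite mul0mx; apply/matrixP => i j.
  by rewrite [i]ord1 lv // mxE.
case: (ltnP s c) => hsc; last first.
  move=> lv; apply: IH => //.
  by move=> j hj; apply: lv; move: hj; rewrite (eqP (_ : c - s == 0)%N) ?subn_eq0 // (eqP (_ : c - s.+1 == 0)%N) // subn_eq0 (leq_trans hsc).
move=> lv.
have htc : (c - s.+1 < c)%N by rewrite ltn_subrL (leq_ltn_trans (leq0n s) hsc).
pose T := Ordinal htc.
have [_ _ hdiv] := Hh T.
have dv := hdiv v hv lv.
pose q := (v 0%R T %/ h T)%Z.
have [lwT hwT _] := Hw T.
have [x hx] : in_lattice B (v - q *: row T B).
  apply: IH.
    case: hv => y ->; rewrite rB; exists (y - q *: wf T).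
    by rewrite mulmxBl -scalemxAl.
  move=> j hj; rewrite entB entZ rB.
  have : (j <= c - s.+1)%N.
    by rewrite -ltnS -subSn // (leq_trans hj) // subSS leqnn.
  rewrite leq_eqVlt => /orP [/eqP ej|hj2].
    have -> : j = T by apply: val_inj.
    by rewrite hwT divzK // subrr.
  by rewrite lv // lwT // mulr0 subr0.
exists (x + q *: delta_mx 0 T).
rewrite mulmxDl -scalemxAl -rowE -hx.
by rewrite subrK.
Qed.
End Lat.

Lemma tri_inj c (T : 'M[int]_c) : (forall i j : 'I_c, (j < i)%N -> T i j = 0) ->
  (forall i, 0 < T i i) -> forall w : 'rV_c, w *m T = 0 -> w = 0.
Proof.
move=> hl hd w hw.
have dT : \det T != 0.
  rewrite -det_tr det_trig.
    rewrite prodf_seq_neq0; apply/allP => i _; apply/implyP => _; rewrite mxE; have := hd i; rewrite lt0r => /andP [hh _]; exact: hh.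
  apply/forallP => i; apply/forallP => j; apply/implyP => hij.
  by rewrite mxE hl.
have : w *m T *m \adj T = 0 by rewrite hw mul0mx.
rewrite -mulmxA mul_mx_adj mul_mx_scalar => h0.
apply/matrixP => i j; have := congr1 (fun N : 'rV[int]_c => N i j) h0.
rewrite !mxE => /eqP; rewrite mulf_eq0 (negbTE dT) /= => /eqP //.
Qed.

Lemma latA l m n (M : 'M[int]_(l, m)) (F : 'M[int]_(n, m)) v :
  in_lattice (block_mx M 0 F 1%:M) v <->
  exists a b, v = row_mx (a *m M + b *m F) b.
Proof.
split.
  move=> [w ->]; exists (lsubmx w), (rsubmx w).
  by rewrite -{1}(hsubmxK w) mul_row_block mulmx0 mulmx1 add0r.
move=> [a [b ->]]; exists (row_mx a b).
by rewrite mul_row_block mulmx0 mulmx1 add0r.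
Qed.

Theorem mainTheorem1 (l m n : nat) (M : 'M[int]_(l, m)) (F : 'M[int]_(n, m)) :
  full_col_rank M ->
  let A : 'M[int]_(l + n, m + n) := block_mx M 0 F 1%:M in
  [/\ full_col_rank A,
      exists B : 'M[int]_(m + n), hermite_basis_of A B &
      forall B : 'M[int]_(m + n), hermite_basis_of A B ->
        [/\ dlsubmx B = 0,
            same_lattice (ulsubmx B) (col_mx M F) &
            forall p : 'rV[int]_n, in_lattice (drsubmx B) p <-> in_relations M F p]].
Proof.
move=> HM A.
have fA : full_col_rank A.
  rewrite /full_col_rank; apply/eqP; apply/row_fullP.
  have /row_fullP [C hC] : row_full (map_mx (fun x : int => x%:~R : rat) M).
    by rewrite /row_full HM.
  set Fq := map_mx (fun x : int => x%:~R : rat) F.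
  exists (block_mx C 0 (- (Fq *m C)) 1%:M).
  rewrite /A map_block_mx map_mx0 map_mx1 mulmx_block.
  rewrite !mul0mx !mulmx0 !mul1mx !addr0 !add0r hC.
  rewrite mulNmx -mulmxA hC mulmx1 /Fq addNr.
  by rewrite -scalar_mx_block.
split => //; first exact: hnf_exists.
move=> B [hB lat].
have dl : dlsubmx B = 0.
  apply/matrixP => i j; rewrite !mxE.
  have [h1 _ _] := hB (rshift m i) (lshift n j); apply: h1.
  by rewrite /= ltn_addr.
have hBb : B = block_mx (ulsubmx B) (ursubmx B) 0 (drsubmx B) by rewrite -dl submxK.
have latB : forall v, in_lattice B v <-> exists w1 w2,
    v = row_mx (w1 *m ulsubmx B) (w1 *m ursubmx B + w2 *m drsubmx B).
  move=> v; split.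
    move=> [w ->]; exists (lsubmx w), (rsubmx w).
    by rewrite {1}hBb -{1}(hsubmxK w) mul_row_block mulmx0 addr0.
  move=> [w1 [w2 ->]]; exists (row_mx w1 w2).
  by rewrite [X in _ = _ *m X]hBb mul_row_block mulmx0 addr0.
have lat' : forall v, in_lattice A v <-> exists w1 w2,
    v = row_mx (w1 *m ulsubmx B) (w1 *m ursubmx B + w2 *m drsubmx B).
  by move=> v; rewrite -latB lat.
split => //.
- move=> v; split.
    move=> [w1 ->].
    have /lat' : exists w0 w2,
        row_mx (w1 *m ulsubmx B) (w1 *m ursubmx B) =
        row_mx (w0 *m ulsubmx B) (w0 *m ursubmx B + w2 *m drsubmx B).
      by exists w1, 0; rewrite mul0mx addr0.
    rewrite /A latA => -[a [b /eq_row_mx [e1 _]]].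
    by exists (row_mx a b); rewrite mul_row_col e1.
  move=> [y ->]; rewrite -(hsubmxK y) mul_row_col.
  have : in_lattice A (row_mx (lsubmx y *m M + rsubmx y *m F) (rsubmx y)).
    by rewrite /A latA; exists (lsubmx y), (rsubmx y).
  by move=> /lat' [w1 [w2 /eq_row_mx [e1 _]]]; exists w1.
- move=> p; split.
    move=> [w2 ->].
    have /lat' : exists w0 w3,
        row_mx 0 (w2 *m drsubmx B) =
        row_mx (w0 *m ulsubmx B) (w0 *m ursubmx B + w3 *m drsubmx B).
      by exists 0, w2; rewrite !mul0mx add0r.
    rewrite /A latA => -[a [b /eq_row_mx [e1 e2]]].
    exists (- a); rewrite e2 mulNmx; apply/eqP; rewrite -addr_eq0 addrC -e1.
    by rewrite eqxx.
  move=> [q hq].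
  have : in_lattice A (row_mx 0 p).
    rewrite /A latA; exists (- q), p.
    by rewrite hq mulNmx addNr.
  move=> /lat' [w1 [w2 /eq_row_mx [e1 e2]]].
  have w10 : w1 = 0.
    apply: (@tri_inj _ (ulsubmx B)) => //.
    - move=> i j hij; rewrite !mxE; have [h1 _ _] := hB (lshift n i) (lshift n j).
      exact: h1.
    - move=> i; rewrite !mxE; have [_ h2 _] := hB (lshift n i) (lshift n i).
      exact: h2.
  by exists w2; rewrite e2 w10 !mul0mx add0r.
Qed.
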